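(* Let $M'$ be a matroid of rank $n$ on $[d]$, let $F$ be a flat of $M'$, and let $M=M'+_Fa$ be the principal extension on $[d]\cup\{a\}$. Let $\gamma=(\gamma_p)_{p\in[d]\cup\{a\}}\in V_{\mathcal{C}(M)}$ be a tuple of vectors in $\mathbb{C}^n$ such that the restriction $(\gamma_p)_{p\in[d]}$ lies in $V_{M'}$ and $\dim\operatorname{span}(\gamma_p:p\in F)=\operatorname{rank}_{M'}(F)$. Then $\gamma\in V_M$.
   Context: Principal extension: for $a\notin[d]$, $M'+_Fa$ is the matroid on $[d]\cup\{a\}$ with bases $\mathcal{B}(M')\cup\{(\lambda\setminus\{b\})\cup\{a\}:\lambda\in\mathcal{B}(M'),\ b\in\lambda\cap F\}$ (it has rank $n$). For a matroid $N$ of rank $n$ on a finite set $E$, a realization is a tuple $(\gamma_e)_{e\in E}$ in $\mathbb{C}^n$ with $(\gamma_e)_{e\in S}$ linearly dependent iff $S$ is dependent in $N$; the matroid variety $V_N$ is the Zariski closure of the set of realizations in $(\mathbb{C}^n)^E$; the circuit variety $V_{\mathcal{C}(N)}$ is the set of tuples with $(\gamma_e)_{e\in S}$ linearly dependent for every dependent set $S$ of $N$. *)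

(* Defs.v *)
From HB Require Import structures.
From mathcomp Require Import all_boot all_algebra.
From mathcomp Require Import Rstruct.
From mathcomp Require Import complex.
From mathcomp Require Import mpoly.

Set Implicit Arguments.
Unset Strict Implicit.
Unset Printing Implicit Defensive.

Import GRing.Theory.
Local Open Scope ring_scope.

Definition CC : closedFieldType := complex Rdefinitions.R.

Section Matroids.
Variable T : finType.

Definition is_matroid (B : {set {set T}}) : Prop :=
  B != set0 /\
  forall B1 B2, B1 \in B -> B2 \in B ->
    forall x, x \in B1 :\: B2 ->
      exists2 y, y \in B2 :\: B1 & (B1 :\ x) :|: [set y] \in B.

Definition matroid_rank_is (B : {set {set T}}) (n : nat) : Prop :=
  forall b, b \in B -> #|b| = n.

Definition indep (B : {set {set T}}) (S : {set T}) : bool :=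
  [exists b in B, S \subset b].

Definition dependent (B : {set {set T}}) (S : {set T}) : bool := ~~ indep B S.

Definition mrank (B : {set {set T}}) (S : {set T}) : nat :=
  \max_(I : {set T} | (I \subset S) && indep B I) #|I|.

Definition is_flat (B : {set {set T}}) (F : {set T}) : Prop :=
  forall e, e \notin F -> (mrank B F < mrank B (e |: F))%N.

End Matroids.

(* Principal extension M' +_F a on [d] ∪ {a}; the ground set is option 'I_d,
   with a represented by None and p ∈ [d] represented by Some p. *)
Definition principal_ext (d : nat) (B : {set {set 'I_d}}) (F : {set 'I_d})
  : {set {set option 'I_d}} :=
  [set [set Some x | x in b] | b : {set 'I_d} in B] :|:
  [set None |: [set Some x | x in b :\ y] | b : {set 'I_d} in B, y : 'I_d in b :&: F].

Section Varieties.
Variables (E : finType) (n : nat).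

Definition lin_indep (g : E -> 'rV[CC]_n) (S : {set E}) : bool :=
  free [seq g e | e <- enum S].

Definition realization (B : {set {set E}}) (g : E -> 'rV[CC]_n) : Prop :=
  forall S : {set E}, ~~ lin_indep g S = dependent B S.

Definition coords (g : E -> 'rV[CC]_n) : 'I_#|{: E * 'I_n}| -> CC :=
  fun k => let ei := enum_val k in g ei.1 0 ei.2.

Definition zariski_closure (X : (E -> 'rV[CC]_n) -> Prop)
  (g : E -> 'rV[CC]_n) : Prop :=
  forall p : {mpoly CC[#|{: E * 'I_n}|]},
    (forall h, X h -> p.@[coords h] = 0) -> p.@[coords g] = 0.

Definition matroid_variety (B : {set {set E}}) (g : E -> 'rV[CC]_n) : Prop :=
  zariski_closure (realization B) g.

Definition circuit_variety (B : {set {set E}}) (g : E -> 'rV[CC]_n) : Prop :=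
  forall S : {set E}, dependent B S -> ~~ lin_indep g S.

End Varieties.

(* Main.v *)
Require Import Defs.
From HB Require Import structures.
From mathcomp Require Import all_boot all_algebra.
From mathcomp Require Import Rstruct complex mpoly.
Set Implicit Arguments.
Unset Strict Implicit.
Unset Printing Implicit Defensive.
Import GRing.Theory.
Local Open Scope ring_scope.

Section Comb.
Variables (d : nat) (B : {set {set 'I_d}}) (F : {set 'I_d}).

Definition sdrop (S : {set option 'I_d}) : {set 'I_d} := [set x | Some x \in S].

Lemma inS (A : {set 'I_d}) x : (Some x \in Some @: A) = (x \in A).
Proof. by apply: mem_imset => x1 x2 [].  Qed.
Lemma NinS (A : {set 'I_d}) : (None \in Some @: A) = false.
Proof. by apply/negbTE/negP => /imsetP[]. Qed.

Lemma Sdecomp (S : {set option 'I_d}) :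
  S = (if None \in S then None |: [set Some x | x in sdrop S] else [set Some x | x in sdrop S]).
Proof.
case HN: (None \in S); apply/setP => [[x|]];
  rewrite ?inE ?inS ?NinS ?inE ?HN //.
Qed.

Lemma sub_SS (A C : {set 'I_d}) : (Some @: A \subset Some @: C) = (A \subset C).
Proof.
apply/subsetP/subsetP => H x.
- by move=> xA; have := H (Some x); rewrite !inS; apply.
- by case/imsetP => y yA ->; rewrite inS H.
Qed.
Lemma sub_SN (A C : {set 'I_d}) : (Some @: A \subset None |: Some @: C) = (A \subset C).
Proof.
apply/subsetP/subsetP => H x.
- by move=> xA; have := H (Some x); rewrite !inE !inS; apply.
- by case/imsetP => y yA ->; rewrite !inE inS H.
Qed.
Lemma sub_NN (A C : {set 'I_d}) : (None |: Some @: A \subset None |: Some @: C) = (A \subset C).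
Proof.
rewrite subUset sub_SN sub1set !inE eqxx /=; done.
Qed.
Lemma sub_NS (A C : {set 'I_d}) : (None |: Some @: A \subset Some @: C) = false.
Proof.
by rewrite subUset sub1set NinS.
Qed.

Lemma memM (b' : {set option 'I_d}) : reflect
  ((exists2 b, b \in B & b' = Some @: b) \/
   (exists2 b, b \in B & exists2 y, y \in b :&: F & b' = None |: Some @: (b :\ y)))
  (b' \in principal_ext B F).
Proof.
rewrite /principal_ext inE; apply: (iffP orP).
- case=> [/imsetP[b bB ->]|/imset2P[b y bB yb ->]]; [left|right]; first by exists b.
  by exists b => //; exists y.
- case=> [[b bB ->]|[b bB [y yb ->]]]; [left|right]; first exact: imset_f.
  by apply/imset2P; exists b y.
Qed.

Lemma indep_ext1 (S0 : {set 'I_d}) : indep (principal_ext B F) (Some @: S0) = indep B S0.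
Proof.
apply/existsP/existsP.
- move=> [b' /andP[/memM [[b bB ->]|[b bB [y yb ->]]]]].
  + by rewrite sub_SS => H; exists b; rewrite bB.
  + rewrite sub_SN => H; exists b; rewrite bB (subset_trans H) //.
    exact: subsetDl.
- move=> [b /andP[bB H]]; exists (Some @: b); rewrite sub_SS H andbT.
  by apply/memM; left; exists b.
Qed.

Lemma indep_ext2 (S0 : {set 'I_d}) : indep (principal_ext B F) (None |: Some @: S0) =
  [exists f in F, (f \notin S0) && indep B (f |: S0)].
Proof.
apply/existsP/existsP.
- move=> [b' /andP[/memM [[b bB ->]|[b bB [y yb ->]]]]].
  + by rewrite sub_NS.
  + rewrite sub_NN => H; exists y; move: yb; rewrite inE => /andP[yb yF].
    rewrite yF /=; apply/andP; split.
    * by apply/negP => /(subsetP H); rewrite !inE eqxx.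
    * apply/existsP; exists b; rewrite bB /= subUset sub1set yb.
      by rewrite (subset_trans H) // subsetDl.
- move=> [f /andP[fF /andP[fS /existsP[b /andP[bB H]]]]].
  exists (None |: Some @: (b :\ f)); rewrite sub_NN; apply/andP; split.
  + apply/memM; right; exists b => //; exists f => //.
    by rewrite inE fF andbT (subsetP H) // setU11.
  + apply/subsetP => x xS; rewrite !inE; apply/andP; split.
    * by apply: contraNneq fS => <-.
    * by apply: (subsetP H); rewrite inE xS orbT.
Qed.


Lemma enum_Sperm (S : {set option 'I_d}) : perm_eq (enum S)
  ((if None \in S then [:: None] else [::]) ++ map Some (enum (sdrop S))).
Proof.
apply: uniq_perm; first exact: enum_uniq.
- case: ifP => HN /=; rewrite ?map_inj_uniq ?enum_uniq //; try exact: Some_inj.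
  rewrite andbT; apply/mapP => -[? _] //.
- move=> [x|]; rewrite mem_enum mem_cat; case: ifP => HN /=.
  + by rewrite (mem_map Some_inj) mem_enum inE.
  + by rewrite (mem_map Some_inj) mem_enum inE.
  + by [].
  + by apply/esym/mapP => -[].
Qed.

Lemma enum_U1perm (f : 'I_d) (S0 : {set 'I_d}) : f \notin S0 ->
  perm_eq (enum (f |: S0)) (f :: enum S0).
Proof.
move=> fS; apply: uniq_perm; rewrite ?enum_uniq //=.
- by rewrite mem_enum fS enum_uniq.
- by move=> x; rewrite mem_enum !inE mem_enum.
Qed.

Variable n : nat.
Variable h : 'I_d -> 'rV[CC]_n.

Definition ext (c : 'I_d -> CC) (o : option 'I_d) : 'rV[CC]_n :=
  if o is Some x then h x else \sum_(f in F) c f *: h f.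

Definition hS (S0 : {set 'I_d}) := [seq h x | x <- enum S0].

Lemma lin_indep_ext c (S : {set option 'I_d}) : lin_indep (ext c) S =
  if None \in S then free ((\sum_(f in F) c f *: h f) :: hS (sdrop S))
  else free (hS (sdrop S)).
Proof.
rewrite /lin_indep (perm_free (perm_map _ (enum_Sperm S))).
by case: ifP => _ /=; rewrite -map_comp.
Qed.

Lemma lin_indep_U1 f (S0 : {set 'I_d}) : f \notin S0 ->
  lin_indep h (f |: S0) = free (h f :: hS S0).
Proof. by move=> fS; rewrite /lin_indep (perm_free (perm_map _ (enum_U1perm fS))). Qed.

Definition good (S0 : {set 'I_d}) :=
  free (hS S0) && [exists f in F, h f \notin <<hS S0>>%VS].

Lemma ext_real (hR : realization B h) c :
  (forall S0, good S0 -> \sum_(f in F) c f *: h f \notin <<hS S0>>%VS) ->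
  realization (principal_ext B F) (ext c).
Proof.
move=> Hg S; rewrite /dependent; congr negb.
have hR' T : indep B T = lin_indep h T by apply: negb_inj; rewrite hR.
rewrite lin_indep_ext; case: ifP => HN; rewrite [in RHS](Sdecomp S) HN.
- rewrite indep_ext2 free_cons; set S0 := sdrop S; apply/idP/idP.
  + move=> /andP[xn fr].
    have: ~~ [forall f in F, h f \in <<hS S0>>%VS].
      apply: contra xn => /forallP H; apply: memv_suml => f fF; apply: memvZ.
      by have := H f; rewrite fF.
    rewrite negb_forall => /existsP[f]; rewrite negb_imply => /andP[fF hf].
    apply/existsP; exists f; rewrite fF /=.
    have fS : f \notin S0.
      by apply: contra hf => fS; apply: memv_span; apply: map_f; rewrite mem_enum.
    by rewrite fS hR' lin_indep_U1 // free_cons hf fr.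
  + move=> /existsP[f /andP[fF /andP[fS]]]; rewrite hR' lin_indep_U1 // free_cons.
    move=> /andP[hf fr]; rewrite fr andbT; apply: Hg.
    by rewrite /good fr; apply/existsP; exists f; rewrite fF.
- by rewrite indep_ext1 hR'.
Qed.

Definition psi (S0 : {set 'I_d}) (v : 'rV[CC]_n) := v - projv <<hS S0>>%VS v.

Definition jopt (S0 : {set 'I_d}) :=
  [pick j : 'I_n | [exists f in F, psi S0 (h f) 0 j != 0]].

Definition acoef (S0 : {set 'I_d}) (f : 'I_d) : CC :=
  if jopt S0 is Some j then psi S0 (h f) 0 j else 0.

Lemma acoef_nz S0 : good S0 -> exists2 f, f \in F & acoef S0 f != 0.
Proof.
move=> /andP[_ /existsP[f /andP[fF hf]]].
have : psi S0 (h f) != 0.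
  apply: contra hf => /eqP/subr0_eq ->; exact: memv_proj.
have [j nz | all0] := pickP (fun j => psi S0 (h f) 0 j != 0); last first.
  move=> /negP[]; apply/eqP/rowP => j; rewrite [RHS]mxE.
  by have := all0 j => /negbFE/eqP.
move=> _; rewrite /acoef /jopt; case: pickP => [j' /existsP[f' /andP[f'F nz']]|none].
  by exists f'.
by have := none j; rewrite (_ : [exists f0 in F, _] = true) //; apply/existsP; exists f; rewrite fF.
Qed.

Lemma acoef_sum S0 c : \sum_(f in F) c f * acoef S0 f != 0 ->
  \sum_(f in F) c f *: h f \notin <<hS S0>>%VS.
Proof.
rewrite /acoef; case: (jopt S0) => [j|]; last first.
  by rewrite big1 ?eqxx // => f _; rewrite mulr0.
apply: contra => xU.
have -> : \sum_(f in F) c f * psi S0 (h f) 0 j = (\sum_(f in F) c f *: psi S0 (h f)) 0 j.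
  by rewrite summxE; apply: eq_bigr => f _; rewrite !mxE.
have <- : psi S0 (\sum_(f in F) c f *: h f) = \sum_(f in F) c f *: psi S0 (h f).
  rewrite /psi linear_sum /= -sumrB; apply: eq_bigr => f _.
  by rewrite linearZ /= scalerBr.
by rewrite /psi projv_id // subrr mxE.
Qed.

End Comb.
Lemma poly_all0 (Q : {poly CC}) : (forall t, Q.[t] = 0) -> Q = 0.
Proof.
move=> H; apply/eqP/negP => nz.
have : size (Q * 'X + 1) != 1.
  have nz' : Q != 0 by apply/negP.
  have : (0 < size Q)%N by rewrite size_poly_gt0.
  move=> sQ; rewrite size_polyDl size_mulX //.
    by move: sQ; case: (size Q).
  by rewrite size_poly1 ltnS.
move=> /closed_rootP[t /rootP]; rewrite hornerD hornerMX H hornerC mul0r add0r.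
by move/eqP; rewrite oner_eq0.
Qed.

Lemma meval_horner N (p : {mpoly CC[N]}) (V : 'I_N -> {poly CC}) t :
  (meval V (map_mpoly polyC p)).[t] = p.@[fun k => (V k).[t]].
Proof.
rewrite !mevalE (perm_big _ (msupp_map_mpoly _ polyC_inj)) horner_sum.
apply: eq_bigr => m _; rewrite mcoeff_map_mpoly hornerCM horner_prod.
by congr (_ * _); apply: eq_bigr => i _; rewrite horner_exp.
Qed.

Section Gen.
Variables (d : nat) (B : {set {set 'I_d}}) (F : {set 'I_d}) (n : nat).
Variable h : 'I_d -> 'rV[CC]_n.
Hypothesis hR : realization B h.
Variable c : 'I_d -> CC.

Definition cur (t : CC) (f : 'I_d) := c f + t ^+ f.+1.

Definition Lp (S0 : {set 'I_d}) : {poly CC} :=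
  \sum_(f in F) ((c f)%:P + 'X^(f.+1)) * (acoef F h S0 f)%:P.

Lemma Lp_eval S0 t : (Lp S0).[t] = \sum_(f in F) cur t f * acoef F h S0 f.
Proof.
rewrite /Lp horner_sum; apply: eq_bigr => f _.
by rewrite hornerM hornerD !hornerC hornerXn.
Qed.

Lemma Lp_nz S0 : good F h S0 -> Lp S0 != 0.
Proof.
move=> /acoef_nz[f1 f1F nz]; apply/eqP => /(congr1 (fun q : {poly CC} => q`_(f1.+1))).
rewrite coef0 /Lp coef_sum (bigD1 f1) //= big1 ?addr0.
  rewrite coefMC coefD coefC coefXn eqxx add0r mul1r => /eqP; exact/negP.
move=> f /andP[_ ff1]; rewrite coefMC coefD coefC coefXn /= eqSS.
have -> : (f1 == f :> nat) = false by apply/negbTE; rewrite eq_sym.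
by rewrite add0r mul0r.
Qed.

Definition Dp : {poly CC} := \prod_(S0 : {set 'I_d} | good F h S0) Lp S0.

Lemma Dp_nz : Dp != 0.
Proof. by apply/prodf_neq0 => S0; apply: Lp_nz. Qed.

Lemma Dp_real t : Dp.[t] != 0 -> realization (principal_ext B F) (ext F h (cur t)).
Proof.
rewrite /Dp horner_prod => /prodf_neq0 H.
apply: ext_real => // S0 gS0; apply: acoef_sum.
by rewrite -Lp_eval; apply: H.
Qed.


Definition Vp (k : 'I_#|{: option 'I_d * 'I_n}|) : {poly CC} :=
  let ei := enum_val k in
  if ei.1 is Some x then (h x 0 ei.2)%:P
  else \sum_(f in F) ((c f)%:P + 'X^(f.+1)) * (h f 0 ei.2)%:P.

Lemma Vp_eval t k : (Vp k).[t] = coords (ext F h (cur t)) k.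
Proof.
rewrite /coords /Vp; case: (enum_val k) => [[x|] i] /=; first by rewrite hornerC.
rewrite horner_sum summxE; apply: eq_bigr => f _.
by rewrite hornerM hornerD !hornerC hornerXn !mxE.
Qed.

Lemma key (p : {mpoly CC[#|{: option 'I_d * 'I_n}|]}) :
  (forall g', realization (principal_ext B F) g' -> p.@[coords g'] = 0) ->
  p.@[coords (ext F h c)] = 0.
Proof.
move=> Hp; set Pp := meval Vp (map_mpoly polyC p).
have HPt t : Pp.[t] = p.@[coords (ext F h (cur t))].
  by rewrite meval_horner; apply: meval_eq => k; rewrite Vp_eval.
have : Pp * Dp = 0.
  apply: poly_all0 => t; rewrite hornerM.
  have [->|nz] := eqVneq (Dp.[t]) 0; first by rewrite mulr0.
  by rewrite HPt Hp ?mul0r //; exact: Dp_real.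
move/eqP; rewrite mulf_eq0 (negbTE Dp_nz) orbF => /eqP P0.
transitivity p.@[coords (ext F h (cur 0))]; last by rewrite -HPt P0 horner0.
apply: meval_eq => k; rewrite /coords; case: (enum_val k) => [[x|] i] //=.
by rewrite !summxE; apply: eq_bigr => f _; rewrite /cur expr0n addr0.
Qed.

End Gen.

Lemma sdropNS d (J : {set 'I_d}) : sdrop (None |: Some @: J) = J.
Proof. by apply/setP => x; rewrite !inE inS. Qed.

Lemma coefA d n (B' : {set {set 'I_d}}) (F : {set 'I_d}) (g : option 'I_d -> 'rV[CC]_n) :
  circuit_variety (principal_ext B' F) g ->
  \dim (span [seq g (Some p) | p <- enum F]) = mrank B' F ->
  exists c : 'I_d -> CC, g None = \sum_(f in F) c f *: g (Some f).
Proof.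
move=> Hc Hdim; set G := fun p => g (Some p).
pose P (J : {set 'I_d}) := (J \subset F) && free (hS G J).
have P0 : P set0 by rewrite /P sub0set /hS enum_set0 nil_free.
have [J /andP[JF frJ] Jmax] := @arg_maxnP _ set0 P (fun J => #|J|) P0.
have inspan f : f \in F -> G f \in <<hS G J>>%VS.
  move=> fF; case fJ: (f \in J).
    by apply: memv_span; apply: map_f; rewrite mem_enum.
  have : ~~ lin_indep G (f |: J).
    apply/negP => fr; have := Jmax (f |: J).
    rewrite /P subUset sub1set fF JF; move/(_ fr).
    by rewrite cardsU1 fJ add1n => H; have : (#|J|.+1 <= #|J|)%N := H; rewrite ltnn.
  by rewrite lin_indep_U1 ?fJ // free_cons frJ andbT negbK.
have Hdim2 : (mrank B' F <= #|J|)%N.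
  rewrite -Hdim; apply: (leq_trans (dimvS _)).
    apply/span_subvP => v /mapP[f]; rewrite mem_enum => fF ->; exact: inspan.
  by apply: leq_trans (dim_span _) _; rewrite size_map -cardE.
have dep : dependent (principal_ext B' F) (None |: Some @: J).
  rewrite /dependent indep_ext2; apply/negP => /existsP[f /andP[fF /andP[fJ ind]]].
  have : (#|f |: J| <= mrank B' F)%N.
    rewrite /mrank; apply: leq_bigmax_cond; rewrite subUset sub1set fF JF ind //.
  by rewrite cardsU1 fJ add1n => /leq_trans/(_ Hdim2); rewrite ltnn.
have := Hc _ dep; rewrite /lin_indep (perm_free (perm_map _ (enum_Sperm _))).
rewrite sdropNS setU11 /= -map_comp free_cons frJ andbT negbK => inN.
have [k Ek _] := free_span frJ inN.
exists (fun f => if f \in J then k (G f) else 0).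
rewrite Ek /hS big_map big_enum /= [in RHS](big_setID J) /= (setIidPr JF).
rewrite [X in _ = _ + X]big1 ?addr0.
  by apply: eq_bigr => f fJ; rewrite fJ.
by move=> f /setDP[_ fnJ]; rewrite (negbTE fnJ) scale0r.
Qed.

Unset Implicit Arguments.
Set Strict Implicit.

Theorem lemma8p4 (d n : nat) (B' : {set {set 'I_d}}) (F : {set 'I_d})
    (g : option 'I_d -> 'rV[CC]_n) :
  is_matroid B' ->
  matroid_rank_is B' n ->
  is_flat B' F ->
  circuit_variety (principal_ext B' F) g ->
  matroid_variety B' (fun p : 'I_d => g (Some p)) ->
  \dim (span [seq g (Some p) | p <- enum F]) = mrank B' F ->
  matroid_variety (principal_ext B' F) g.
Proof.
move=> HM Hrk Hflat Hc HV Hdim.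
have [c Ec] := coefA Hc Hdim.
set G := fun p => g (Some p).
move=> p Hp.
have -> : p.@[coords g] = p.@[coords (ext F G c)].
  apply: meval_eq => k; rewrite /coords; case: (enum_val k) => [[x|] i] //=.
  by rewrite Ec.
pose Lq (k : 'I_#|{: option 'I_d * 'I_n}|) : {mpoly CC[#|{: 'I_d * 'I_n}|]} :=
  let ei := enum_val k in
  if ei.1 is Some x then 'X_(enum_rank (x, ei.2))
  else \sum_(f in F) c f *: 'X_(enum_rank (f, ei.2)).
pose lq := [tuple Lq k | k < #|{: option 'I_d * 'I_n}|].
have Hq (h' : 'I_d -> 'rV[CC]_n) : (p \mPo lq).@[coords h'] = p.@[coords (ext F h' c)].
  rewrite comp_mpoly_meval; apply: meval_eq => k.
  rewrite tnth_mktuple /Lq /coords; case: (enum_val k) => [[x|] i] /=.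
    by rewrite mevalXU enum_rankK.
  rewrite (big_morph (meval _) (mevalD _) (meval0 _)) summxE; apply: eq_bigr => f _.
  by rewrite mevalZ mevalXU enum_rankK !mxE.
rewrite -Hq; apply: HV => h' hR'; rewrite Hq.
exact: (key hR').
Qed.
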